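(* Let $G=(V,E)$ be a graph with a linear order $<$ on $E$, let $\bar{x}=(x_1,\dots,x_{|V|})$, and define $$U'(G,\bar{x},y)=\sum_{A\subseteq E}\prod_{i=1}^{|V|}x_i^{k_i((V,A))}\,y^{|A|}.$$ Then $$U'(G,\bar{x},y)=\sum_{F=(V,A_f)\in\mathcal{F}(G)}\ \sum_{A_i\subseteq E_i(F,G,<)}\ \prod_{j=1}^{|V|}x_j^{k_j((V,A_f\setminus A_i))}\,y^{|A_f\setminus A_i|}\,(1+y)^{e(F,G,<)}.$$
   Context: A graph $G=(V,E)$ consists of a finite nonempty vertex set $V$ and a finite set $E$ of edges. Each edge has as its set of endpoints a 1- or 2-element subset of $V$, so loops and parallel edges are allowed. $(V,A)$ is the spanning subgraph with edge set $A\subseteq E$. $k(H)$ is the number of connected components of $H$, and $k_i(H)$ is the number of connected components of $H$ having exactly $i$ vertices. $F_{-e+f}$ denotes $F$ with edge $e$ deleted and edge $f$ added. A spanning forest of $G$ is a spanning subgraph $F=(V,A)$ which is a forest (no cycles, no loops) with $k(F)=k(G)$; $\mathcal{F}(G)$ is the set of spanning forests. For a linear order $<$ on $E$ and $F=(V,A_f)\in\mathcal{F}(G)$: $e\in A_f$ is internally active if there is no $f\in E\setminus A_f$ with $e<f$ and $F_{-e+f}\in\mathcal{F}(G)$; the set of these is $E_i(F,G,<)$. $f\in E\setminus A_f$ is externally active if there is no $e\in A_f$ with $f<e$ and $F_{-e+f}\in\mathcal{F}(G)$; $e(F,G,<)$ is the number of externally active edges. *)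

(* Defs.v *)
From HB Require Import structures.
From mathcomp Require Import all_boot all_order all_algebra.
From Stdlib Require Import ClassicalEpsilon.
Set Implicit Arguments. Unset Strict Implicit. Unset Printing Implicit Defensive.
Import GRing.Theory.
Local Open Scope ring_scope.

Definition pbool (P : Prop) : bool :=
  if excluded_middle_informative P then true else false.

Section Graphs.
Variables (V E : finType) (ends : E -> {set V}).

(* A multigraph: every edge has a 1- or 2-element set of endpoints. *)
Definition is_graph : Prop :=
  (0 < #|V|)%N /\ forall e : E, (1 <= #|ends e| <= 2)%N.

Definition strict_linear_order (lt : rel E) : Prop :=
  irreflexive lt /\ transitive lt /\ (forall e f, e != f -> lt e f || lt f e).

Definition adj (A : {set E}) : rel V :=
  fun u v => [exists e in A, (u \in ends e) && (v \in ends e)].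

Definition components (A : {set E}) : {set {set V}} :=
  [set [set v | connect (adj A) u v] | u : V].

Definition kc (A : {set E}) : nat := #|components A|.
Definition kci (i : nat) (A : {set E}) : nat :=
  #|[set C in components A | #|C| == i]|.

(* A cycle in (V,A): distinct edges e_0..e_{m-1} in A (m >= 1) and distinct
   vertices v_0..v_{m-1} with ends e_i = {v_i, v_{i+1 mod m}}.
   m = 1 is a loop, m = 2 a pair of parallel edges. *)
Definition has_cycle (A : {set E}) : Prop :=
  exists (e0 : E) (v0 : V) (es : seq E) (vs : seq V),
    [/\ (0 < size es)%N, size vs = size es, uniq es && uniq vs,
        all (fun e => e \in A) es &
        forall i, (i < size es)%N ->
          ends (nth e0 es i) = [set nth v0 vs i;
                                   nth v0 vs ((i.+1) %% size es)]].

Definition spanning_forest (A : {set E}) : Prop :=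
  ~ has_cycle A /\ kc A = kc [set: E].

Definition swap (A : {set E}) (e f : E) : {set E} := f |: (A :\ e).

Variable lt : rel E.

Definition int_active (A : {set E}) : {set E} :=
  [set e in A | pbool (~ exists f, [/\ f \notin A, lt e f & spanning_forest (swap A e f)])].

Definition ext_active (A : {set E}) : nat :=
  #|[set f in ~: A | pbool (~ exists e, [/\ e \in A, lt f e & spanning_forest (swap A e f)])]|.
End Graphs.

Definition Uprime (R : comNzRingType) (V E : finType) (ends : E -> {set V})
    (x : nat -> R) (y : R) : R :=
  \sum_(A : {set E}) (\prod_(1 <= i < #|V|.+1) x i ^+ kci ends i A) * y ^+ #|A|.

(* Main.v *)
Require Import Defs.
From HB Require Import structures.
From mathcomp Require Import all_boot all_order all_algebra zify.
From Stdlib Require Import ClassicalEpsilon.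
Set Implicit Arguments. Unset Strict Implicit. Unset Printing Implicit Defensive.
Import GRing.Theory.

Section Conn.
Variables (V E : finType) (ends : E -> {set V}).

Implicit Types (A B Q H : {set E}) (e f g : E) (u v a b w : V).
Local Notation conn A := (connect (adj ends A)).

Definition econn (A : {set E}) (e : E) :=
  forall a b, a \in ends e -> b \in ends e -> conn A a b.

Lemma adj_sym A : symmetric (adj ends A).
Proof.
move=> u v; apply/existsP/existsP=> [] [e /and3P[eA ue ve]]; exists e;
  by rewrite eA ue ve.
Qed.

Lemma conn_sym A u v : conn A u v = conn A v u.
Proof. exact: (sym_connect_sym (adj_sym A)). Qed.

Lemma conn_edge A e a b : e \in A -> a \in ends e -> b \in ends e -> conn A a b.
Proof. by move=> eA ae be; apply: connect1; apply/existsP; exists e; rewrite eA ae be. Qed.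

Lemma econn_in A e : e \in A -> econn A e.
Proof. by move=> eA a b; apply: conn_edge. Qed.

Lemma conn_lift Q H u v : (forall e, e \in Q -> econn H e) -> conn Q u v -> conn H u v.
Proof.
move=> hQ; apply: (@connect_sub _ (adj ends Q) (adj ends H)) => a b.
move=> /existsP[e /and3P[eQ ae be]]; exact: (hQ e eQ a b ae be).
Qed.

Lemma conn_sub Q H u v : Q \subset H -> conn Q u v -> conn H u v.
Proof.
move=> sQH; apply: conn_lift => e eQ; apply: econn_in; exact: (subsetP sQH).
Qed.

Lemma connect_back (T : finType) (r : rel T) (Z : T -> Prop) (x y : T) :
  (forall s t : T, r s t -> Z t -> Z s) -> connect r x y -> Z y -> Z x.
Proof.
move=> hZ /connectP[p pp ->]; elim: p x pp => //= t p IH s /andP[rab pb] Zl.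
exact: hZ rab (IH t pb Zl).
Qed.

Lemma conn_split Q e u v : conn Q u v -> ~~ conn (Q :\ e) u v ->
  exists a b, [/\ a \in ends e, b \in ends e, conn (Q :\ e) u a & conn (Q :\ e) b v].
Proof.
move=> cuv ncuv.
pose Z w := conn (Q :\ e) w v \/ exists a b, [/\ a \in ends e, b \in ends e,
                 conn (Q :\ e) w a & conn (Q :\ e) b v].
have: Z u.
  apply: (connect_back (r := adj ends Q)) cuv _; last by left; exact: connect0.
  move=> w w' /existsP[g /and3P[gQ wg w'g]] [Hw'|[a [b [ae be ca cb]]]].
  - have [ge|ge] := eqVneq g e; first subst g.
      by right; exists w, w'; split=> //; exact: connect0.
    left; apply: connect_trans Hw'; apply: conn_edge wg w'g.
    by rewrite !inE ge.
  - have [ge|ge] := eqVneq g e; first subst g.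
      by right; exists w, b; split=> //; exact: connect0.
    right; exists a, b; split=> //; apply: connect_trans ca; apply: conn_edge wg w'g.
    by rewrite !inE ge.
by case=> // /(negP ncuv).
Qed.

Lemma comp_eq A B : (forall u v, conn A u v = conn B u v) -> components ends A = components ends B.
Proof.
move=> h; rewrite /components; apply: eq_imset => u; apply/setP => v.
by rewrite !inE h.
Qed.

Lemma kc_eq A B : (forall u v, conn A u v = conn B u v) -> kc ends A = kc ends B.
Proof. by move=> h; rewrite /kc (comp_eq h). Qed.

Lemma kci_eq i A B : (forall u v, conn A u v = conn B u v) -> kci ends i A = kci ends i B.
Proof. by move=> h; rewrite /kci (comp_eq h). Qed.

Lemma kc_conn A B : A \subset B -> kc ends A = kc ends B -> forall u v, conn B u v -> conn A u v.
Proof.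
move=> sAB hk u v cB.
pose cl (X : {set E}) u := [set w | conn X u w].
pose h (C : {set V}) := \bigcup_(w in C) cl B w.
have hcl u0 : h (cl A u0) = cl B u0.
  apply/setP=> z; apply/bigcupP/idP.
    case=> w; rewrite !inE => cw; apply: connect_trans.
    exact: conn_sub sAB cw.
  by rewrite inE => cz; exists u0; rewrite !inE //; exact: connect0.
have compB : components ends B = h @: components ends A.
  rewrite /components -imset_comp; apply: eq_imset => w /=; by rewrite hcl.
have inj : {in components ends A &, injective h}.
  apply/imset_injP; rewrite -compB; apply/eqP; exact: (esym hk).
have eqc : cl A u = cl A v.
  apply: inj; try by apply/imsetP; eexists.
  rewrite !hcl; apply/setP=> z; rewrite !inE; apply/idP/idP=> cz.
    by apply: connect_trans cz; rewrite conn_sym.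
  exact: connect_trans cB cz.
have : v \in cl A v by rewrite inE connect0.
by rewrite -eqc inE.
Qed.
End Conn.

Lemma two_elems (T : finType) (X : {set T}) a b c : (#|X| <= 2)%N -> a \in X -> b \in X ->
  a != b -> c \in X -> (c == a) || (c == b).
Proof.
move=> hX aX bX ab cX; apply/negPn/negP; rewrite negb_or => /andP[ca cb].
move: hX; rewrite (cardsD1 a) aX (cardsD1 b) !inE eq_sym ab bX (cardsD1 c) !inE ca cb cX.
by [].
Qed.

Lemma set2_eq (T : finType) (X : {set T}) a b : (#|X| <= 2)%N -> a \in X -> b \in X ->
  a != b -> X = [set a; b].
Proof.
move=> hX aX bX ab; apply/setP=> c; rewrite !inE; apply/idP/idP.
  exact: two_elems.
by case/orP=> /eqP->.
Qed.

Lemma neq_succ i : (i == i.+1) = false. Proof. by elim: i. Qed.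
Lemma neq_succ2 i : (i == i.+2) = false. Proof. by elim: i. Qed.
Lemma neq_succ' i : (i.+1 == i) = false. Proof. by elim: i. Qed.

Section Cyc.
Variables (V E : finType) (ends : E -> {set V}).
Implicit Types (A B Q H : {set E}) (e f g : E) (u v a b w : V).
Local Notation conn A := (connect (adj ends A)).

Lemma cycle_econn A : has_cycle ends A -> exists2 e, e \in A & econn ends (A :\ e) e.
Proof.
case=> e0 [v0 [es [vs [hsz hsv /andP[ues uvs] hall hends]]]].
set m := size es in hsz hsv hends.
have inA i : (i < m)%N -> nth e0 es i \in A by move=> im; apply: (allP hall); exact: mem_nth.
set e := nth e0 es 0.
exists e; first exact: inA.
set v1 := nth v0 vs (1 %% m).
have key i : (i < m)%N -> conn (A :\ e) v1 (nth v0 vs (i.+1 %% m)).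
  elim: i => [|i IH] im; first exact: connect0.
  apply: connect_trans (IH (ltnW im)) _.
  rewrite (modn_small im).
  apply: (conn_edge (e := nth e0 es i.+1)).
  - by rewrite !inE inA // andbT /e (nth_uniq e0 im hsz ues).
  - by rewrite hends // !inE eqxx.
  - by rewrite hends // !inE eqxx orbT.
have c10 : conn (A :\ e) v1 (nth v0 vs 0).
  have hm : m.-1.+1 = m by case: (m) hsz.
  have := key m.-1; rewrite hm modnn; apply; by case: (m) hsz.
move=> a b; rewrite /e hends // !inE -/v1 => /orP[] /eqP-> /orP[] /eqP->;
  rewrite ?connect0 //; by [rewrite conn_sym | ].
Qed.

Lemma econn_cycle A e : (forall g, #|ends g| <= 2)%N -> (0 < #|ends e|)%N -> e \in A ->
  econn ends (A :\ e) e -> has_cycle ends A.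
Proof.
move=> h2 h1 eA ce.
have [a ae] := card_gt0P h1.
have [onlya|] := boolP [forall z, (z \in ends e) ==> (z == a)].
  exists e, a, [:: e], [:: a]; split=> //=; first by rewrite eA.
  case=> // _; rewrite /=; apply/setP=> z; rewrite !inE orbb.
  apply/idP/idP; first by move=> ze; exact: (implyP (forallP onlya z) ze).
  by move/eqP->.
rewrite negb_forall => /existsP[b]; rewrite negb_imply => /andP[be ba].
have ee : ends e = [set a; b] by apply: set2_eq; rewrite // eq_sym.
have /connectP[p pp lp] : conn (A :\ e) b a by apply: ce.
case: (shortenP pp) lp => p' pp' up' _ lp'.
set w := b :: p'.
set k := size p'.
have kpos : (0 < k)%N.
  rewrite /k; case: (p') lp' => //= hab; by rewrite hab eqxx in ba.
pose pe x y := odflt e [pick g in A :\ e | (x \in ends g) && (y \in ends g)].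
have peP x y : adj ends (A :\ e) x y ->
    [/\ pe x y \in A :\ e, x \in ends (pe x y) & y \in ends (pe x y)].
  move=> /existsP[g0 hg0]; rewrite /pe; case: pickP => [g /andP[gA /andP[-> ->]]|] //=.
  by move/(_ g0); rewrite hg0.
have adjw i : (i < k)%N -> adj ends (A :\ e) (nth a w i) (nth a w i.+1).
  by move=> ik; exact: (pathP a pp' i ik).
have uw : uniq w by [].
have szw : size w = k.+1 by [].
have wij i j : (i < k.+1)%N -> (j < k.+1)%N -> (nth a w i == nth a w j) = (i == j).
  by move=> ik jk; apply: nth_uniq; rewrite ?szw.
pose f i := pe (nth a w i) (nth a w i.+1).
have fP i : (i < k)%N -> f i \in A :\ e /\ ends (f i) = [set nth a w i; nth a w i.+1].
  move=> ik; have [h1' h2' h3'] := peP _ _ (adjw i ik); split=> //.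
  apply: set2_eq => //; rewrite wij ?ltnS ?(ltnW ik) ?neq_succ //.
exists e, a, (rcons (mkseq f k) e), w; split.
- by rewrite size_rcons.
- by rewrite size_rcons size_mkseq.
- rewrite uw andbT rcons_uniq; apply/andP; split.
    apply/negP => /mapP[i]; rewrite mem_iota add0n => /andP[_ ik] /esym ef.
    by have [] := fP i ik; rewrite -ef !inE eqxx.
  rewrite /mkseq map_inj_in_uniq ?iota_uniq // => i j.
  rewrite !mem_iota !add0n => /andP[_ ik] /andP[_ jk] fij.
  have [_ ei] := fP i ik; have [_ ej] := fP j jk.
  have hi : nth a w i \in ends (f j) by rewrite -fij ei !inE eqxx.
  have hj : nth a w j \in ends (f i) by rewrite fij ej !inE eqxx.
  move: hi hj; rewrite ei ej !inE !wij ?ltnS ?(ltnW ik) ?(ltnW jk) ?ik ?jk //.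
  case/orP=> /eqP -> //; by rewrite neq_succ neq_succ2.
- rewrite all_rcons eA /=; apply/allP=> g /mapP[i]; rewrite mem_iota add0n.
  by case/andP=> _ ik ->; have [] := fP i ik; rewrite !inE => /andP[].
- move=> i; rewrite size_rcons size_mkseq ltnS => ik.
  rewrite nth_rcons size_mkseq; case: ltnP => ik'.
    rewrite nth_mkseq // modn_small ?ltnS //; by have [] := fP i ik'.
  have -> : i = k by apply/eqP; rewrite eqn_leq ik ik'.
  have wk : nth a w k = a.
    by rewrite {2}lp' (last_nth a).
  rewrite eqxx modnn ee wk /=.
  by apply/setP=> z; rewrite !inE orbC.
Qed.
End Cyc.

Lemma pboolP (P : Prop) : reflect P (pbool P).
Proof. by rewrite /pbool; case: excluded_middle_informative => h; constructor. Qed.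

Section Forest.
Variables (V E : finType) (ends : E -> {set V}).
Hypothesis hg : forall g, (1 <= #|ends g| <= 2)%N.
Implicit Types (A B Q H F : {set E}) (e f g : E) (u v a b w : V).
Local Notation conn A := (connect (adj ends A)).
Local Notation sf := (spanning_forest ends).

Lemma h2 g : (#|ends g| <= 2)%N. Proof. by case/andP: (hg g). Qed.
Lemma h1 g : (0 < #|ends g|)%N. Proof. by case/andP: (hg g). Qed.

Lemma econn_of_pair H g a' b' : a' \in ends g -> b' \in ends g -> a' != b' ->
  conn H a' b' -> econn ends H g.
Proof.
move=> ag bg ab c a b ha hb.
case/orP: (two_elems (h2 g) ag bg ab ha) => /eqP->;
case/orP: (two_elems (h2 g) ag bg ab hb) => /eqP->; rewrite ?connect0 //.
by rewrite conn_sym.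
Qed.

Lemma not_econn H g : ~ econn ends H g ->
  exists a b, [/\ a \in ends g, b \in ends g & ~~ conn H a b].
Proof.
move=> ne.
have [h|h] := boolP [exists a, exists b, [&& a \in ends g, b \in ends g & ~~ conn H a b]].
  by case/existsP: h => a /existsP[b /and3P[*]]; exists a, b.
exfalso; apply: ne => a b ha hb; apply/negPn/negP => nc; move/negP: h; apply.
by apply/existsP; exists a; apply/existsP; exists b; rewrite ha hb nc.
Qed.

Lemma forest_bridge F e : ~ has_cycle ends F -> e \in F -> ~ econn ends (F :\ e) e.
Proof. by move=> nc eF ce; apply: nc; apply: (econn_cycle h2 (h1 e) eF ce). Qed.

Lemma sf_conn F u v : sf F -> conn F u v = conn setT u v.
Proof.
case=> _ hk; apply/idP/idP; first exact: conn_sub (subsetT F).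
exact: kc_conn (subsetT F) hk u v.
Qed.

Lemma econnT g : econn ends setT g.
Proof. by apply: econn_in; rewrite inE. Qed.

Lemma exchange F e f : sf F -> e \in F -> f \notin F -> ~ econn ends (F :\ e) f ->
  sf (swap F e f).
Proof.
move=> sF eF fF nce.
have [u [v [uf vf ncuv]]] := not_econn nce.
set F' := swap F e f.
have fF' : f \in F' by rewrite !inE eqxx.
have sub1 : F :\ e \subset F' by apply/subsetP=> z zF; rewrite /F' /swap in_setU1 zF orbT.
have cuv : conn F u v by rewrite sf_conn //; exact: (econnT uf vf).
have connF' x y : conn F' x y = conn setT x y.
  apply/idP/idP; first exact: conn_sub (subsetT _).
  rewrite -(sf_conn _ _ sF); apply: conn_lift => g gF.
  have [->|ge] := eqVneq g e; last by apply: econn_in; rewrite !inE ge gF orbT.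
  have [a' [b' [ae be ca cb]]] := conn_split cuv ncuv.
  have [ab|ab] := eqVneq a' b'.
    by move: ncuv; rewrite (connect_trans ca) // ab.
  apply: (econn_of_pair ae be ab).
  have c1 : conn F' a' u by rewrite conn_sym; exact: conn_sub sub1 ca.
  have c2 : conn F' u v := conn_edge fF' uf vf.
  have c3 : conn F' v b' by rewrite conn_sym; exact: conn_sub sub1 cb.
  exact: connect_trans (connect_trans c1 c2) c3.
split.
  move=> /cycle_econn[g gF' ceg].
  have [gf|gf] := eqVneq g f.
    subst g; apply: nce; move: ceg; rewrite /F' /swap setU1K //.
    by rewrite !inE negb_and fF orbT.
  have gFe : g \in F :\ e by move: gF'; rewrite !inE (negbTE gf).
  have gF : g \in F by move: gFe; rewrite !inE => /andP[].
  have [c [d [cg dg ncd]]] := not_econn (forest_bridge sF.1 gF).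
  have ccd : conn (F' :\ g) c d by apply: ceg.
  have sub2 : (F' :\ g) :\ f \subset F :\ g.
    by apply/subsetP=> z; rewrite /F' /swap !inE;
      case: (z \in F); case: (z == e); case: (z == f); case: (z == g).
  have sub3 : (F' :\ g) :\ f \subset F :\ e.
    by apply/subsetP=> z; rewrite /F' /swap !inE;
      case: (z \in F); case: (z == e); case: (z == f); case: (z == g).
  have [ccd'|nccd'] := boolP (conn ((F' :\ g) :\ f) c d).
    by move: ncd; rewrite (conn_sub sub2 ccd').
  have [a [b [af bf ca db]]] := conn_split ccd nccd'.
  have [ab|ab] := eqVneq a b.
    by subst b; move: ncd; rewrite (conn_sub sub2 (connect_trans ca db)).
  apply: nce; apply: (econn_of_pair af bf ab).
  have c1 : conn (F :\ e) a c by rewrite conn_sym; exact: conn_sub sub3 ca.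
  have c2 : conn (F :\ e) c d := conn_edge gFe cg dg.
  have c3 : conn (F :\ e) d b by rewrite conn_sym; exact: conn_sub sub3 db.
  exact: connect_trans (connect_trans c1 c2) c3.
by apply: kc_eq => x y; exact: connF'.
Qed.

Lemma exists_sf : exists F, sf F.
Proof.
suff: forall n F, (#|F| <= n)%N -> (forall x y, conn F x y = conn setT x y) -> exists F, sf F.
  by move/(_ #|[set: E]| setT (leqnn _)); apply.
elim=> [|n IH] F hF hc.
  have F0 : F = set0 by apply/eqP; rewrite -cards_eq0 -leqn0.
  exists F; split; last exact: kc_eq.
  by case=> e0 [v0 [[|x es] [vs [//= _ _ _ /andP[]]]]]; rewrite F0 inE.
case: (excluded_middle_informative (has_cycle ends F)) => [hcy|hncy]; last first.
  by exists F; split=> //; exact: kc_eq.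
have [g gF ceg] := cycle_econn hcy.
apply: (IH (F :\ g)).
  by move: hF; rewrite (cardsD1 g F) gF.
move=> x y; rewrite -hc; apply/idP/idP.
  by apply: conn_sub; apply/subsetP=> z; rewrite !inE => /andP[].
apply: conn_lift => h hF'.
have [->|hg'] := eqVneq h g; first exact: ceg.
by apply: econn_in; rewrite !inE hg' hF'.
Qed.
End Forest.

Section Active.
Variables (V E : finType) (ends : E -> {set V}).
Hypothesis hg : forall g, (1 <= #|ends g| <= 2)%N.
Variable lt : rel E.
Hypothesis hlt : strict_linear_order lt.
Implicit Types (A B Q H F : {set E}) (e f g : E) (u v a b w : V).
Local Notation conn A := (connect (adj ends A)).
Local Notation sf := (spanning_forest ends).

Definition XA F := [set f in ~: F | pbool (~ exists e, [/\ e \in F, lt f e & sf (swap F e f)])].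
Local Notation IA := (int_active ends lt).
Definition intvl F A := (F :\: A \subset IA F) && (A :\: F \subset XA F).

Lemma IA_mem F e f : e \in IA F -> f \notin F -> sf (swap F e f) -> ~~ lt e f.
Proof.
rewrite inE => /andP[_ /pboolP h] fF s; apply/negP => l; apply: h; by exists f.
Qed.

Lemma XA_mem F e f : f \in XA F -> e \in F -> sf (swap F e f) -> ~~ lt f e.
Proof.
rewrite inE => /andP[_ /pboolP h] eF s; apply/negP => l; apply: h; by exists e.
Qed.

Lemma XA_notin F f : f \in XA F -> f \notin F.
Proof. by rewrite !inE => /andP[]. Qed.

Lemma lt_total e f : e != f -> lt e f || lt f e.
Proof. by case: hlt => _ [_ ]; apply. Qed.

Lemma lt_irr e : lt e e = false.
Proof. by case: hlt => h _; apply: h. Qed.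

Lemma weight F (Ai : {set E}) f : sf F -> Ai \subset IA F -> f \in XA F -> econn ends (F :\: Ai) f.
Proof.
move=> sF; move: {2}#|Ai| (leqnn #|Ai|) => n; elim: n Ai => [|n IH] Ai hn sAi fX u v uf vf.
  have -> : Ai = set0 by apply/eqP; rewrite -cards_eq0 -leqn0.
  by rewrite setD0 sf_conn //; exact: (econnT uf vf).
have [->|[e eAi]] := set_0Vmem Ai.
  by rewrite setD0 sf_conn //; exact: (econnT uf vf).
have eIA : e \in IA F := subsetP sAi e eAi.
have eF : e \in F by move: eIA; rewrite inE => /andP[].
have hn' : (#|Ai :\ e| <= n)%N by move: hn; rewrite (cardsD1 e Ai) eAi.
have sAi' : Ai :\ e \subset IA F by apply: subset_trans sAi; exact: subD1set.
have c' := IH _ hn' sAi' fX u v uf vf.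
have eqs : F :\: Ai = (F :\: (Ai :\ e)) :\ e.
  apply/setP=> z; rewrite !inE; have [->|ze] := eqVneq z e; by rewrite ?eAi ?eqxx ?ze ?andbF.
apply/negPn/negP => nc.
have nc' : ~~ conn ((F :\: (Ai :\ e)) :\ e) u v by rewrite -eqs.
have [p [q [pe qe cp cq]]] := conn_split c' nc'.
rewrite -eqs in cp cq.
have sub : F :\: Ai \subset F :\ e.
  by apply/subsetP=> z; rewrite !inE; have [->|ze] := eqVneq z e; rewrite ?eAi ?eqxx ?ze ?andbF //= => /andP[].
have [cuv|ncuv] := boolP (conn (F :\ e) u v).
  have [pq|pq] := eqVneq p q.
    by subst q; move/negP: nc; apply; exact: connect_trans cp cq.
  apply: (forest_bridge hg sF.1 eF); apply: (econn_of_pair hg pe qe pq).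
  have c1 : conn (F :\ e) p u by rewrite conn_sym; exact: conn_sub sub cp.
  have c3 : conn (F :\ e) v q by rewrite conn_sym; exact: conn_sub sub cq.
  exact: connect_trans (connect_trans c1 cuv) c3.
have fF := XA_notin fX.
have ncf : ~ econn ends (F :\ e) f by move=> h; move/negP: ncuv; apply; apply: h.
have s' := exchange hg sF eF fF ncf.
have ef : e != f by apply/eqP => ef; move: fF; rewrite -ef eF.
case/orP: (lt_total ef) => l.
  by move/negP: (IA_mem eIA fF s').
by move/negP: (XA_mem fX eF s').
Qed.

Definition pos e := #|[set g | lt g e]|.

Lemma lt_pos e f : lt e f -> (pos e < pos f)%N.
Proof.
move=> l; apply: proper_card; apply/properP; split.
  apply/subsetP=> z; rewrite !inE => lz; case: hlt => _ [tr _]; exact: tr lz l.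
by exists e; rewrite !inE ?l ?lt_irr.
Qed.

Lemma pos_lt_card e : (pos e < #|E|)%N.
Proof.
rewrite /pos -cardsT; apply: proper_card; apply/properP; split; first exact: subsetT.
by exists e; rewrite !inE ?lt_irr.
Qed.

Lemma core_unique A F F' d : sf F -> sf F' -> intvl F A -> intvl F' A ->
  d \in F -> d \notin F' -> (forall g, g \in F' -> g \notin F -> lt g d) -> False.
Proof.
move=> sF sF' /andP[iF xF] /andP[iF' xF'] dF dF' hmax.
have [a [b [ad bd nab]]] := not_econn (forest_bridge hg sF.1 dF).
have cab : conn F' a b by rewrite sf_conn //; exact: (econnT ad bd).
have L : forall n Q, (#|Q| <= n)%N -> Q \subset F' -> conn Q a b ->
    exists2 g, g \in Q & ~ econn ends (F :\ d) g /\ ~~ conn (F' :\ g) a b.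
  elim=> [|n IH] Q hn sQ cQ.
    have Q0 : Q = set0 by apply/eqP; rewrite -cards_eq0 -leqn0.
    move: cQ; rewrite Q0 => /connectP[[|x p] /= pp eb]; first by move: nab; rewrite eb connect0.
    by case/andP: pp => /existsP[g]; rewrite inE.
  case: (excluded_middle_informative (exists2 g, g \in Q & conn (Q :\ g) a b)) => [[g gQ cg]|hno].
    have [|||g' g'Q h] := IH (Q :\ g).
    - by move: hn; rewrite (cardsD1 g Q) gQ.
    - by apply: subset_trans sQ; exact: subD1set.
    - exact: cg.
    by exists g'; [move: g'Q; rewrite inE => /andP[] | ].
  case: (excluded_middle_informative (exists2 g, g \in Q & ~ econn ends (F :\ d) g)) => [[g gQ ng]|hall].
    exists g => //; split=> //; apply/negP => cg'.
    have ncg : ~~ conn (Q :\ g) a b by apply/negP => h; apply: hno; exists g.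
    have [p [q [pg qg cp cq]]] := conn_split cQ ncg.
    have [pq|pq] := eqVneq p q.
      by subst q; move/negP: ncg; apply; exact: connect_trans cp cq.
    have gF' : g \in F' := subsetP sQ g gQ.
    have sub : Q :\ g \subset F' :\ g by apply: setSD.
    apply: (forest_bridge hg sF'.1 gF'); apply: (econn_of_pair hg pg qg pq).
    have c1 : conn (F' :\ g) p a by rewrite conn_sym; exact: conn_sub sub cp.
    have c3 : conn (F' :\ g) b q by rewrite conn_sym; exact: conn_sub sub cq.
    exact: connect_trans (connect_trans c1 cg') c3.
  exfalso; move/negP: nab; apply; apply: conn_lift cQ => g gQ.
  case: (excluded_middle_informative (econn ends (F :\ d) g)) => // h.
  by exfalso; apply: hall; exists g.
have [g gF' [ng ncg]] := L _ F' (leqnn _) (subxx _) cab.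
have gF : g \notin F.
  apply/negP=> gF; apply: ng; apply: econn_in; rewrite !inE gF andbT.
  by apply/eqP=> gd; move: dF'; rewrite -gd gF'.
have s1 := exchange hg sF dF gF ng.
have nce : ~ econn ends (F' :\ g) d by move=> h; move/negP: ncg; apply; apply: h.
have s2 := exchange hg sF' gF' dF' nce.
have l := hmax g gF' gF.
have [gA|gA] := boolP (g \in A).
  have gX : g \in XA F by apply: (subsetP xF); rewrite inE gA gF.
  by move/negP: (XA_mem gX dF s1).
have gI : g \in IA F' by apply: (subsetP iF'); rewrite inE gA gF'.
by move/negP: (IA_mem gI dF' s2).
Qed.

Lemma unique_sf A F F' : sf F -> sf F' -> intvl F A -> intvl F' A -> F = F'.
Proof.
move=> sF sF' iF iF'; apply/eqP; apply/negPn/negP => neq.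
set D := (F :\: F') :|: (F' :\: F).
have [d0 d0D] : exists d0, d0 \in D.
  apply/set0Pn; apply/negP => /eqP D0; move/negP: neq; apply.
  rewrite eqEsubset; apply/andP; split; apply/subsetP=> z zF; apply/negPn/negP => zn;
  (have : z \in D by rewrite /D !inE zF zn ?orbT); by rewrite D0 inE.
case: (@arg_maxnP _ d0 (mem D) pos d0D) => d dD hd.
have hmax g : g \in D -> g != d -> lt g d.
  move=> gD gd; case/orP: (lt_total gd) => // l.
  have := hd g gD; rewrite /geq /= leqNgt; by rewrite lt_pos.
move: dD; rewrite !inE => /orP[] /andP[dn dF].
  apply: (core_unique sF sF' iF iF' dF dn) => g gF' gF; apply: hmax.
    by rewrite !inE gF gF' orbT.
  by apply/eqP=> gd; move: dn; rewrite -gd gF'.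
apply: (core_unique sF' sF iF' iF dF dn) => g gF gF'; apply: hmax.
  by rewrite !inE gF gF'.
by apply/eqP=> gd; move: dn; rewrite -gd gF.
Qed.
End Active.

Section Exist.
Variables (V E : finType) (ends : E -> {set V}).
Hypothesis hg : forall g, (1 <= #|ends g| <= 2)%N.
Variable lt : rel E.
Hypothesis hlt : strict_linear_order lt.
Implicit Types (A B Q H F : {set E}) (e f g : E) (u v a b w : V).
Local Notation sf := (spanning_forest ends).

Lemma exists_interval A : exists2 F, sf F & intvl ends lt F A.
Proof.
have [F0 sF0] := exists_sf ends.
pose K := #|E|.+1.
pose c x := if x \in A then (K + (K - pos lt x))%N else pos lt x.
pose Phi F := (\sum_(x in F) c x)%N.
have pF0 : pbool (sf F0) by apply/pboolP.
case: (@arg_maxnP _ F0 (fun F => pbool (sf F)) Phi pF0) => F /pboolP sF hF.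
have better e f : e \in F -> f \notin F -> sf (swap F e f) -> (c e < c f)%N -> False.
  move=> eF fF s l.
  have := hF (swap F e f) (introT (pboolP _) s); rewrite /geq /Phi /swap.
  rewrite (big_setD1 e eF) /= big_setU1 /=; last by rewrite !inE negb_and fF orbT.
  lia.
have posK x : (pos lt x < K)%N by apply: ltnW; rewrite ltnS; exact: pos_lt_card.
exists F => //; apply/andP; split; apply/subsetP.
  move=> e; rewrite !inE => /andP[eA eF]; rewrite eF /=.
  apply/pboolP => -[f [fF l s]]; apply: (better e f eF fF s).
  have := lt_pos hlt l; have := posK e; have := posK f.
  rewrite /c (negbTE eA); case: (f \in A); lia.
move=> f; rewrite !inE => /andP[fF fA]; rewrite fF /=.
apply/pboolP => -[e [eF l s]]; apply: (better e f eF fF s).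
have := lt_pos hlt l; have := posK e; have := posK f.
rewrite /c fA; case: (e \in A); lia.
Qed.
End Exist.

Open Scope ring_scope.

Lemma subset_sum (R : comNzRingType) (T : finType) (X : {set T}) (y : R) :
  \sum_(B : {set T} | B \subset X) y ^+ #|B| = (1 + y) ^+ #|X|.
Proof.
move: {2}#|X| (erefl #|X|) => n; elim: n X => [|n IH] X hX.
  have -> : X = set0 by apply/eqP; rewrite -cards_eq0 hX.
  rewrite (big_pred1 set0) ?cards0 ?expr0 // => B /=; by rewrite subset0.
have [a aX] : exists a, a \in X by apply/card_gt0P; rewrite hX.
have hX' : #|X :\ a| = n by move: hX; rewrite (cardsD1 a) aX add1n => -[].
rewrite (bigID (fun B : {set T} => a \in B)) /=.
have -> : \sum_(B : {set T} | (B \subset X) && (a \notin B)) y ^+ #|B| =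
          \sum_(B : {set T} | B \subset X :\ a) y ^+ #|B|.
  by apply: eq_bigl => B; rewrite subsetD1.
rewrite (IH _ hX') hX exprS mulrDl mul1r addrC; congr (_ + _); last first.
2: by rewrite hX'.
rewrite -[in RHS]hX' -(IH _ hX') mulr_sumr.
rewrite (reindex_onto (fun B => a |: B) (fun B => B :\ a)) /=; last first.
  by move=> B /andP[_ aB]; rewrite setD1K.
apply: eq_big => B.
  rewrite setU11 andbT; apply/andP/idP.
    by case=> sB /eqP <-; apply: setSD.
  move=> sB; rewrite subsetD1 in sB; case/andP: sB => sB aB.
  by rewrite setU1K // subUset sub1set aX sB.
move=> /andP[_ /eqP hB]; have aB : a \notin B by rewrite -hB setD11.
by rewrite cardsU1 aB add1n exprS.
Qed.


Theorem theorem3p5 (R : comNzRingType) (V E : finType) (ends : E -> {set V})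
    (lt : rel E) (x : nat -> R) (y : R) :
  is_graph ends -> strict_linear_order lt ->
  Uprime ends x y =
  \sum_(Af : {set E} | pbool (spanning_forest ends Af))
    \sum_(Ai : {set E} | Ai \subset int_active ends lt Af)
      (\prod_(1 <= j < #|V|.+1) x j ^+ kci ends j (Af :\: Ai))
        * y ^+ #|Af :\: Ai| * (1 + y) ^+ ext_active ends lt Af.
Proof.
move=> [_ hg] hlt.
pose P (A : {set E}) := \prod_(1 <= i < #|V|.+1) x i ^+ kci ends i A.
pose gA (A : {set E}) := P A * y ^+ #|A|.
rewrite /Uprime -/P.
transitivity (\sum_(F : {set E} | pbool (spanning_forest ends F))
                \sum_(A : {set E} | intvl ends lt F A) gA A).
  rewrite (exchange_big_dep predT) //=; apply: eq_bigr => A _.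
  have [F0 sF0 iF0] := exists_interval ends hlt A.
  rewrite (big_pred1 F0) // => F /=; apply/idP/eqP.
    case/andP=> /pboolP sF iF; exact: (unique_sf hg hlt sF sF0 iF iF0).
  by move=> ->; rewrite iF0 andbT; apply/pboolP.
apply: eq_bigr => F /pboolP sF.
have IAF : int_active ends lt F \subset F.
  by apply/subsetP=> z; rewrite inE => /andP[].
have XAF : XA ends lt F \subset ~: F.
  by apply/subsetP=> z; rewrite inE => /andP[].
transitivity (\sum_(Ai : {set E} | Ai \subset int_active ends lt F)
                \sum_(B : {set E} | B \subset XA ends lt F) gA ((F :\: Ai) :|: B)).
  rewrite (partition_big (fun A => F :\: A) (fun Ai => Ai \subset int_active ends lt F));
    last by move=> A /andP[].
  apply: eq_bigr => Ai sAi.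
  have hAi z : z \in Ai -> z \in F by move=> zA; apply: (subsetP IAF); apply: (subsetP sAi).
  rewrite (reindex_onto (fun B => (F :\: Ai) :|: B) (fun A => A :\: F)) /=; last first.
    move=> A /andP[_ /eqP <-]; apply/setP=> z; rewrite !inE.
    by case: (z \in A); case: (z \in F).
  apply: eq_bigl => B; apply/idP/idP.
    case/andP=> /andP[/andP[_ hX] _] /eqP hB; by rewrite -hB.
  move=> sB.
  have hB z : z \in B -> z \notin F.
    by move=> zB; have := subsetP XAF z (subsetP sB z zB); rewrite inE.
  have hB' z : (z \in B) ==> (z \notin F) by apply/implyP; exact: hB.
  have hAi' z : (z \in Ai) ==> (z \in F) by apply/implyP; exact: hAi.
  have e1 : ((F :\: Ai) :|: B) :\: F = B.
    apply/setP=> z; rewrite !inE; move: (hB' z).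
    by case: (z \in B); case: (z \in F); case: (z \in Ai).
  have e2 : F :\: ((F :\: Ai) :|: B) = Ai.
    apply/setP=> z; rewrite !inE; move: (hB' z) (hAi' z).
    by case: (z \in B); case: (z \in F); case: (z \in Ai).
  by rewrite /intvl e1 e2 sAi sB !eqxx.
apply: eq_bigr => Ai sAi.
change (ext_active ends lt F) with #|XA ends lt F|.
rewrite -subset_sum mulr_sumr; apply: eq_bigr => B sB.
have hB z : z \in B -> z \notin F.
  by move=> zB; have := subsetP XAF z (subsetP sB z zB); rewrite inE.
have ceq u v : connect (adj ends ((F :\: Ai) :|: B)) u v = connect (adj ends (F :\: Ai)) u v.
  apply/idP/idP; last exact: conn_sub (subsetUl _ _).
  apply: conn_lift => g; rewrite in_setU => /orP[gF|gB]; first exact: econn_in.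
  exact: (weight hg hlt sF sAi (subsetP sB g gB)).
have hcard : #|(F :\: Ai) :|: B| = (#|F :\: Ai| + #|B|)%N.
  rewrite -cardsUI.
  have -> : (F :\: Ai) :&: B = set0.
    apply/setP=> z; rewrite !inE; have : (z \in B) ==> (z \notin F) by apply/implyP; exact: hB.
    by case: (z \in B); case: (z \in F); rewrite ?andbF.
  by rewrite cards0 addn0.
rewrite /gA hcard exprD mulrA; congr (_ * _ * _).
by apply: eq_bigr => i _; rewrite (kci_eq i ceq).
Qed.
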